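(* Let $h=(h_1,h_2)\in\mathbb{R}^{2*}$, $h\neq0$, let $\nu$ be an antinorm on $\mathbb{R}^2$ whose unit ball $\Omega=\{u:\nu(u)\ge1\}$ has properties $( * )$ and $( ** )$, and let $\mathcal H(h,u)=\langle h,u\rangle+\nu(u)$ for $u\in C=\operatorname{dom}\nu=\operatorname{cl}\mathbb{R}_+\Omega$. 1. If $(-h_1,h_2)\in\operatorname{int}\Omega^\diamond$, the maximum of $\mathcal H(h,u)$ over $u\in C$ is attained only at $u=0$. 2. If $(-h_1,h_2)\in\partial\Omega^\diamond$, write $(-h_1,h_2)=(\cosh_{\Omega^\diamond}\eta,\sinh_{\Omega^\diamond}\eta)$ for some angle $\eta$. Then $\max_{u\in C}\mathcal H(h,u)$ is attained at every point of $\{\lambda(\cosh_\Omega\theta,\sinh_\Omega\theta):\lambda\ge0,\ \theta\in{}^\diamond\eta\}$.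
   Context: An antinorm on $\mathbb{R}^2$ is $\nu:\mathbb{R}^2\to\mathbb{R}\cup\{-\infty\}$ concave, upper semicontinuous, positively homogeneous, with $\operatorname{dom}\nu\neq\varnothing$ and $\nu>0$ on $\operatorname{ri}\operatorname{dom}\nu$; its unit ball is nonempty, closed, convex, avoids $0$ and satisfies $\lambda\Omega\subset\Omega$ for $\lambda>1$. Points of $\mathbb{R}^2$: $(x,y)$; of $\mathbb{R}^{2*}$: $(p,q)$. $( * )$: $\lambda\Omega\cap\partial\Omega=\varnothing$ for $\lambda>1$. $( ** )$: the boundary rays $l_0,l_1$ of $C$ satisfy $\operatorname{dist}(l_k,\Omega)=0$. Antipolar: $\Omega^\diamond=\{(p,q):px-qy\ge1\ \forall(x,y)\in\Omega\}$. Hyperbolic convex trigonometric functions: fix $\omega_0=(x_0,y_0)\in\partial\Omega$, $\omega_0^\diamond=(p_0,q_0)\in\partial\Omega^\diamond$ with $p_0x_0-q_0y_0=1$; for $\omega=(x,y)\in\partial\Omega$, $\theta$ is twice the signed (counterclockwise positive) area of the region bounded by the segment $O\omega_0$, the arc of $\partial\Omega$ from $\omega_0$ to $\omega$ and the segment $\omega O$, and $(\cosh_\Omega\theta,\sinh_\Omega\theta)=(x,y)$; $\cosh_{\Omega^\diamond},\sinh_{\Omega^\diamond}$ are defined likewise; ${}^\diamond\eta$ is the set of $\theta$ with $\cosh_\Omega\theta\cosh_{\Omega^\diamond}\eta-\sinh_\Omega\theta\sinh_{\Omega^\diamond}\eta=1$. *)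

(* Defs.v *)
(* R : realType, points of R^2 and R^2* are pairs R * R. *)
From HB Require Import structures.
From mathcomp Require Import all_boot all_order all_algebra.
From mathcomp Require Import all_classical all_reals all_analysis.
Set Implicit Arguments. Unset Strict Implicit. Unset Printing Implicit Defensive.
Import Order.TTheory GRing.Theory Num.Theory.
Import numFieldNormedType.Exports.
Local Open Scope classical_set_scope.
Local Open Scope ring_scope.

Section Defs.
Variable R : realType.
Local Notation P := (R * R)%type.

Definition sc (t : R) (u : P) : P := (t * u.1, t * u.2).
Definition lc (t : R) (u : P) (s : R) (v : P) : P :=
  (t * u.1 + s * v.1, t * u.2 + s * v.2).

Definition bd (A : set P) : set P := closure A `\` interior A.

Definition affine_set (A : set P) : Prop :=
  forall x y t, A x -> A y -> A (lc (1 - t) x t y).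
Definition aff (A : set P) : set P :=
  \bigcap_(B in [set B | affine_set B /\ A `<=` B]) B.
Definition ri (A : set P) : set P :=
  [set u | A u /\ exists2 e : R, 0 < e &
     forall v, aff A v -> ball u e v -> A v].

Definition dom (nu : P -> \bar R) : set P := [set u | nu u != -oo%E].
Definition antinorm (nu : P -> \bar R) : Prop :=
  (forall u, nu u != +oo%E) /\ [/\
      (forall u v t, 0 < t < 1 ->
         (t%:E * nu u + (1 - t)%:E * nu v <= nu (lc t u (1 - t) v))%E),
      (* upper semicontinuous: superlevel sets are closed *)
      (forall a : R, closed [set u | (a%:E <= nu u)%E]),
      (forall (l : R) u, 0 < l -> nu (sc l u) = (l%:E * nu u)%E),
      dom nu !=set0 &
      (forall u, ri (dom nu) u -> (0 < nu u)%E)].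

Definition unit_ball (nu : P -> \bar R) : set P := [set u | (1 <= nu u)%E].

Definition prop_star (Om : set P) : Prop :=
  forall l : R, 1 < l -> (sc l @` Om) `&` bd Om = set0.

Definition ray (d : P) : set P := [set z | exists2 t : R, 0 <= t & z = sc t d].
Definition prop_2star (C Om : set P) : Prop :=
  forall d : P, d != (0, 0) -> ray d `<=` bd C ->
    forall e : R, 0 < e -> exists a b, [/\ ray d a, Om b & ball a e b].

Definition antipolar (Om : set P) : set P :=
  [set w | forall u, Om u -> 1 <= w.1 * u.1 - w.2 * u.2].

Definition det2 (a b : P) : R := a.1 * b.2 - a.2 * b.1.
Definition cone2 (a b : P) : set P :=
  [set z | exists s t : R, [/\ 0 <= s, 0 <= t & z = lc s a t b]].
Definition arc (S : set P) (w0 w : P) : set P := bd S `&` cone2 w0 w.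
Definition sector (S : set P) (w0 w : P) : set P :=
  [set z | exists t w', [/\ 0 <= t <= 1, arc S w0 w w' & z = sc t w']].
Definition area (A : set P) : R :=
  fine (((@lebesgue_measure R) \x (@lebesgue_measure R)) A)%E.
(* theta is the (hyperbolic convex) angle of w in S, with base point w0:
   twice the signed (counterclockwise positive) area of the sector *)
Definition hangle (S : set P) (w0 w : P) (theta : R) : Prop :=
  bd S w /\ theta = 2 * Num.sg (det2 w0 w) * area (sector S w0 w).
Definition hpt (S : set P) (w0 : P) (theta : R) : P :=
  xget (0, 0) [set w | hangle S w0 w theta].
Definition hcosh (S : set P) (w0 : P) (theta : R) : R := (hpt S w0 theta).1.
Definition hsinh (S : set P) (w0 : P) (theta : R) : R := (hpt S w0 theta).2.

Definition dangles (Om : set P) (w0 : P) (Omd : set P) (w0d : P) (eta : R)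
  : set R :=
  [set theta | hcosh Om w0 theta * hcosh Omd w0d eta
               - hsinh Om w0 theta * hsinh Omd w0d eta = 1].

Definition Ham (nu : P -> \bar R) (h u : P) : \bar R :=
  ((h.1 * u.1 + h.2 * u.2)%:E + nu u)%E.

Definition is_argmax (C : set P) (f : P -> \bar R) (u : P) : Prop :=
  C u /\ forall v, C v -> (f v <= f u)%E.

End Defs.

(* Main.v *)
Require Import Defs.
From HB Require Import structures.
From mathcomp Require Import all_boot all_order all_algebra.
From mathcomp Require Import all_classical all_reals all_analysis.
From mathcomp Require Import ring lra.
Set Implicit Arguments.
Import Order.TTheory GRing.Theory Num.Theory.
Import numFieldNormedType.Exports.
Local Open Scope classical_set_scope.
Local Open Scope ring_scope.

Definition pr {R : realType} (w u : R * R) : R := w.1 * u.1 - w.2 * u.2.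

Lemma closureP (R : realType) (A : set (R * R)) x :
  closure A x <-> forall e : R, 0 < e -> exists y, A y /\ ball x e y.
Proof.
split.
- move=> cA e e0. have [y [Ay By]] := cA _ (@nbhsx_ballx R _ x e e0). by exists y.
- move=> H B /nbhs_ballP [e e0 sB]. have [y [Ay By]] := H e e0.
  exists y; split=> //; exact: sB.
Qed.

Lemma ball2 (R : realType) (u v : R * R) e :
  ball u e v <-> `|u.1 - v.1| < e /\ `|u.2 - v.2| < e.
Proof. by case: u v => u1 u2 [v1 v2]. Qed.

Lemma approx {R : realType} (b u : R * R) {e : R} : 0 < e ->
  exists t, (0 < t < 1) /\ ball u e (lc t b (1 - t) u).
Proof.
move=> e0.
set d := `|u.1 - b.1| + `|u.2 - b.2|.
have d0 : 0 <= d by rewrite /d addr_ge0.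
have ed : 0 < e + d by lra.
set t := e / (2 * (e + d)).
have t0 : 0 < t by rewrite /t divr_gt0 // mulr_gt0.
have ht : t * (2 * (e + d)) = e by rewrite /t divfK // mulf_neq0 // gt_eqF.
have tl : t * d < e by nra.
exists t; split; first by apply/andP; split => //; nra.
apply/ball2; rewrite /lc /=; split.
- have -> : u.1 - (t * b.1 + (1 - t) * u.1) = t * (u.1 - b.1) by ring.
  rewrite normrM gtr0_norm //.
  have : `|u.1 - b.1| <= d by rewrite /d lerDl.
  nra.
- have -> : u.2 - (t * b.2 + (1 - t) * u.2) = t * (u.2 - b.2) by ring.
  rewrite normrM gtr0_norm //.
  have : `|u.2 - b.2| <= d by rewrite /d lerDr.
  nra.
Qed.

Lemma fin_dom (R : realType) (nu : R * R -> \bar R) u :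
  antinorm nu -> dom nu u -> exists r, nu u = r%:E.
Proof.
case=> Hnoo _; move: (Hnoo u); rewrite /dom /=.
by case: (nu u) => // r _ _; exists r.
Qed.

Lemma ge_dom (R : realType) (z : \bar R) r : (r%:E <= z)%E -> z != -oo%E.
Proof. by case: z. Qed.
Arguments ge_dom {R z r}.

Lemma concf (R : realType) (nu : R * R -> \bar R) x y rx ry t :
  antinorm nu -> nu x = rx%:E -> nu y = ry%:E -> 0 < t < 1 ->
  ((t * rx + (1 - t) * ry)%:E <= nu (lc t x (1 - t) y))%E.
Proof.
case=> _ [Hc _ _ _ _] Ex Ey Ht. have := Hc x y t Ht.
by rewrite Ex Ey -!EFinM -EFinD.
Qed.

Lemma homf (R : realType) (nu : R * R -> \bar R) u r l :
  antinorm nu -> nu u = r%:E -> 0 < l -> nu (sc l u) = (l * r)%:E.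
Proof. by case=> _ [_ _ Hh _ _] Eu l0; rewrite Hh // Eu -EFinM. Qed.
Arguments homf [R nu u r l].
Arguments concf [R nu x y rx ry t].

Lemma ub_closed (R : realType) (nu : R * R -> \bar R) x :
  antinorm nu -> closure (unit_ball nu) x -> unit_ball nu x.
Proof. by case=> _ [_ Hu _ _ _]; apply: (Hu 1). Qed.

Lemma ub_fin (R : realType) (nu : R * R -> \bar R) x :
  antinorm nu -> unit_ball nu x -> exists r, nu x = r%:E /\ 1 <= r.
Proof.
move=> Ha Hx; have [r Er] := fin_dom Ha (ge_dom Hx).
by exists r; split => //; move: Hx; rewrite /unit_ball /= Er lee_fin.
Qed.

Lemma nu0 (R : realType) (nu : R * R -> \bar R) b :
  antinorm nu -> unit_ball nu b -> nu (0, 0) = 0%:E.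
Proof.
move=> Ha Hb. have [rb [Eb rb1]] := ub_fin Ha Hb.
have H1 : ((-1)%:E <= nu (0%R, 0%R))%E.
  case: (Ha) => _ [_ Hu _ _ _]; apply: (Hu (-1)).
  apply/closureP => e e0. have [t [/andP [t0 t1] Bt]] := approx b (0, 0) e0.
  exists (lc t b (1 - t) (0, 0)); split => //=.
  have -> : lc t b (1 - t) (0, 0) = sc t b by rewrite /lc /sc /= !mulr0 !addr0.
  rewrite (homf Ha Eb t0) lee_fin; nra.
have [r0 E0] := fin_dom Ha (ge_dom H1).
have : nu (sc 2 (0, 0)) = (2 * r0)%:E by apply: homf.
rewrite /sc /= mulr0 E0 => /eqP; rewrite eqe => /eqP H.
have -> : r0 = 0 by lra.
done.
Qed.

Lemma int_pt (R : realType) (nu : R * R -> \bar R) a :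
  antinorm nu -> prop_star (unit_ball nu) -> unit_ball nu a ->
  exists b e, 0 < e /\ ball b e `<=` unit_ball nu.
Proof.
move=> Ha Hs Hx. have [r [Er r1]] := ub_fin Ha Hx.
have H2 : unit_ball nu (sc 2 a).
  rewrite /unit_ball /= (homf Ha Er) // lee_fin; lra.
have [Hi|Hni] := pselect (interior (unit_ball nu) (sc 2 a)).
  move: Hi; rewrite /interior => /nbhs_ballP [e e0 sB].
  by exists (sc 2 a), e.
exfalso.
have : ((sc 2 @` unit_ball nu) `&` bd (unit_ball nu)) (sc 2 a).
  split; first by exists a.
  split => //; exact: subset_closure.
by rewrite (Hs 2) //; lra.
Qed.

Lemma super (R : realType) (nu : R * R -> \bar R) x y rx ry :
  antinorm nu -> nu x = rx%:E -> nu y = ry%:E ->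
  ((rx + ry)%:E <= nu ((x.1 + y.1)%R, (x.2 + y.2)%R))%E.
Proof.
move=> Ha Ex Ey.
have E2x := homf Ha Ex (ltr0Sn _ 1).
have E2y := homf Ha Ey (ltr0Sn _ 1).
have h : (0 < 2^-1 :> R) && (2^-1 < 1 :> R) by apply/andP; split; lra.
have := concf Ha E2x E2y h.
have -> : lc 2^-1 (sc 2 x) (1 - 2^-1) (sc 2 y) = (x.1 + y.1, x.2 + y.2).
  by rewrite /lc /sc /=; congr pair; field.
suff -> : 2^-1 * (2 * rx) + (1 - 2^-1) * (2 * ry) = rx + ry :> R by [].
by field.
Qed.
Arguments super [R nu x y rx ry].

Lemma ub_dom (R : realType) (nu : R * R -> \bar R) x :
  unit_ball nu x -> dom nu x.
Proof. exact: ge_dom. Qed.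

Lemma nu_pos (R : realType) (nu : R * R -> \bar R) b e u :
  antinorm nu -> 0 < e -> ball b e `<=` unit_ball nu -> dom nu u ->
  exists r, nu u = r%:E /\ 0 <= r.
Proof.
move=> Ha e0 Hb Hu. have [r Er] := fin_dom Ha Hu.
exists r; split => //. rewrite leNgt; apply/negP => r0.
have Hbb : unit_ball nu b by apply: Hb; exact: ballxx.
have [rb [Eb rb1]] := ub_fin Ha Hbb.
have : ((r / 2)%:E <= nu u)%E.
  case: (Ha) => _ [_ Hu' _ _ Hri]; apply: (Hu' (r / 2)).
  apply/closureP => e' e'0. have [t [/andP [t0 t1] Bt]] := approx b u e'0.
  exists (lc t b (1 - t) u); split => //=.
  have tt : 0 < t < 1 by apply/andP.
  have Hy := concf Ha Eb Er tt.
  suff : (0 < nu (lc t b (1 - t) u))%E.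
    by move=> H; apply: le_trans (ltW H); rewrite lee_fin; lra.
  apply: Hri; split; first exact: ge_dom Hy.
  exists (t * e); first exact: mulr_gt0.
  move=> v _ /ball2 [B1 B2].
  pose a' := ((v.1 - (1 - t) * u.1) / t, (v.2 - (1 - t) * u.2) / t).
  have tn : t != 0 by rewrite gt_eqF.
  have Ha' : unit_ball nu a'.
    apply: Hb; apply/ball2; rewrite /a' /lc /= in B1 B2 *; split.
    - have -> : b.1 - (v.1 - (1 - t) * u.1) / t = (t * b.1 + (1 - t) * u.1 - v.1) / t by field.
      rewrite normrM normfV (gtr0_norm t0) ltr_pdivrMr //; lra.
    - have -> : b.2 - (v.2 - (1 - t) * u.2) / t = (t * b.2 + (1 - t) * u.2 - v.2) / t by field.
      rewrite normrM normfV (gtr0_norm t0) ltr_pdivrMr //; lra.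
  have [ra [Ea _]] := ub_fin Ha Ha'.
  have := concf Ha Ea Er tt.
  have -> : lc t a' (1 - t) u = v.
    by rewrite /lc /a' /=; case: v {B1 B2 a' Ha' Ea} => v1 v2 /=; congr pair; field.
  exact: ge_dom.
rewrite Er lee_fin; lra.
Qed.

Lemma main_ineq (R : realType) (nu : R * R -> \bar R) a w v r :
  antinorm nu -> unit_ball nu a -> antipolar (unit_ball nu) w ->
  nu v = r%:E -> 0 <= r -> r <= pr w v.
Proof.
move=> Ha Hua Hw Ev r0.
have [r1|r1] := eqVneq r 0.
- subst r. rewrite leNgt; apply/negP => q0.
  have [ra [Ea ra1]] := ub_fin Ha Hua.
  pose s := (`|pr w a| + 1) / (- pr w v).
  have s0 : 0 < s by rewrite /s divr_gt0 //; lra.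
  have Es := homf Ha Ev s0.
  have := super Ha Ea Es. rewrite mulr0 addr0 => Hy.
  have Hu : unit_ball nu ((a.1 + (sc s v).1)%R, (a.2 + (sc s v).2)%R).
    by rewrite /unit_ball /=; apply: le_trans Hy; rewrite lee_fin.
  have := Hw _ Hu. rewrite /pr /sc /=.
  have qn : pr w v != 0 by rewrite lt_eqF.
  have Hs : s * pr w v = - (`|pr w a| + 1) by rewrite /s; field.
  move: Hs; rewrite /pr => Hs.
  have := ler_norm (pr w a); rewrite /pr => Hn.
  nra.
- have rp : 0 < r by rewrite lt_def r1.
  have ri : 0 < r^-1 by rewrite invr_gt0.
  have Es := homf Ha Ev ri.
  have Hu : unit_ball nu (sc r^-1 v).
    by rewrite /unit_ball /= Es mulVf.
  have := Hw _ Hu.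
  have -> : pr w v = r * (w.1 * (sc r^-1 v).1 - w.2 * (sc r^-1 v).2).
    by rewrite /pr /sc /=; field.
  nra.
Qed.

Lemma aux_le (R : realType) (a b e y : R) : `|a - b| < e -> (b - a) * y <= e * `|y|.
Proof.
move=> H. apply: le_trans (ler_norm _) _. rewrite normrM distrC.
by apply: ler_wpM2r => //; apply: ltW.
Qed.

Lemma ap_closed (R : realType) (Om : set (R * R)) w :
  closure (antipolar Om) w -> antipolar Om w.
Proof.
move=> Hc u Hu. rewrite leNgt; apply/negP => hlt.
set d := 1 - (w.1 * u.1 - w.2 * u.2).
have d0 : 0 < d by rewrite /d; lra.
have n0 : 0 < `|u.1| + `|u.2| + 1.
  by have := normr_ge0 u.1; have := normr_ge0 u.2; lra.
set e := d / (`|u.1| + `|u.2| + 1).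
have e0 : 0 < e by rewrite /e divr_gt0.
have He : e * (`|u.1| + `|u.2| + 1) = d by rewrite /e divfK // gt_eqF.
have [w' [Hw' /ball2 [B1 B2]]] := (proj1 (closureP _ _) Hc) e e0.
have := Hw' u Hu.
have := @aux_le _ _ _ _ u.1 B1. have := @aux_le _ _ _ _ (- u.2) B2. rewrite normrN.
move: He; rewrite /d => He.
nra.
Qed.

Lemma Ham_val (R : realType) (nu : R * R -> \bar R) h v r :
  nu v = r%:E -> Ham nu h v = (h.1 * v.1 + h.2 * v.2 + r)%:E.
Proof. by move=> E; rewrite /Ham E -EFinD. Qed.

Lemma sq_pos (R : realType) (v : R * R) : v != (0, 0) -> 0 < v.1 * v.1 + v.2 * v.2.
Proof.
case: v => v1 v2 /= Hv.
have [z1|n1] := eqVneq v1 0.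
- subst v1. have n2 : v2 != 0 by apply: contra Hv => /eqP ->.
  have : 0 < v2 * v2.
    by case: (ltgtP v2 0) => h; [nra | nra | by move: n2; rewrite h eqxx].
  lra.
- have : 0 < v1 * v1.
    by case: (ltgtP v1 0) => h; [nra | nra | by move: n1; rewrite h eqxx].
  have : 0 <= v2 * v2 by rewrite -expr2 sqr_ge0.
  lra.
Qed.
Arguments main_ineq [R nu a w v r].
Arguments Ham_val [R nu] h [v r].
Arguments nu_pos [R nu b e u].
Arguments int_pt [R nu a].
Arguments nu0 [R nu b].
Arguments ub_closed [R nu x].
Arguments ub_fin [R nu x].
Arguments sq_pos [R v].

Theorem proposition5 (R : realType) (h : R * R) (nu : R * R -> \bar R)
  (w0 w0d : R * R) :
  h != (0, 0) ->
  antinorm nu ->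
  prop_star (unit_ball nu) ->
  prop_2star (dom nu) (unit_ball nu) ->
  (* base points for the hyperbolic convex trigonometric functions *)
  bd (unit_ball nu) w0 ->
  bd (antipolar (unit_ball nu)) w0d ->
  w0d.1 * w0.1 - w0d.2 * w0.2 = 1 ->
  (* part 1 *)
  (interior (antipolar (unit_ball nu)) (- h.1, h.2) ->
     [set u | is_argmax (dom nu) (Ham nu h) u] = [set (0, 0)])
  /\
  (* part 2 *)
  (bd (antipolar (unit_ball nu)) (- h.1, h.2) ->
     forall eta : R,
       (hcosh (antipolar (unit_ball nu)) w0d eta,
        hsinh (antipolar (unit_ball nu)) w0d eta) = (- h.1, h.2) ->
     forall (l theta : R), 0 <= l ->
       dangles (unit_ball nu) w0 (antipolar (unit_ball nu)) w0d eta theta ->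
       is_argmax (dom nu) (Ham nu h)
         (l * hcosh (unit_ball nu) w0 theta, l * hsinh (unit_ball nu) w0 theta)).
Proof.
move=> hn Ha Hs H2 Hw0 Hw0d Hpair.
have Hua : unit_ball nu w0 by apply: ub_closed Ha _; case: Hw0.
have [b [e [e0 Hb]]] := int_pt Ha Hs Hua.
have N0 := nu0 Ha Hua.
have D0 : dom nu (0, 0) by rewrite /dom /= N0.
have Hle : forall v, dom nu v -> antipolar (unit_ball nu) (- h.1, h.2) ->
    (Ham nu h v <= 0%:E)%E.
  move=> v Hv Hw. have [r [Er r0]] := nu_pos Ha e0 Hb Hv.
  have := main_ineq Ha Hua Hw Er r0. rewrite (Ham_val h Er) lee_fin /pr /=. lra.
have H00 : Ham nu h (0, 0) = 0%:E.
  by rewrite (Ham_val h N0) !mulr0 !addr0.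
split.
- move=> Hi. have Hw := interior_subset Hi.
  move: Hi; rewrite /interior => /nbhs_ballP [e1 e10 Hb1].
  have Hlt : forall v, dom nu v -> v != (0, 0) -> (Ham nu h v < 0%:E)%E.
    move=> v Hv vn. have [r [Er r0]] := nu_pos Ha e0 Hb Hv.
    have n0 : 0 < `|v.1| + `|v.2| + 1.
      by have := normr_ge0 v.1; have := normr_ge0 v.2; lra.
    set c := e1 / (2 * (`|v.1| + `|v.2| + 1)).
    have c0 : 0 < c by rewrite /c divr_gt0 // mulr_gt0.
    have Hc : c * (2 * (`|v.1| + `|v.2| + 1)) = e1.
      by rewrite /c divfK // mulf_neq0 // gt_eqF.
    have Hw' : antipolar (unit_ball nu) (- h.1 - c * v.1, h.2 + c * v.2).
      apply: Hb1; apply/ball2 => /=; split.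
      - have -> : - h.1 - (- h.1 - c * v.1) = c * v.1 by ring.
        rewrite normrM (gtr0_norm c0).
        have := normr_ge0 v.1; have := normr_ge0 v.2; nra.
      - have -> : h.2 - (h.2 + c * v.2) = - (c * v.2) by ring.
        rewrite normrN normrM (gtr0_norm c0).
        have := normr_ge0 v.1; have := normr_ge0 v.2; nra.
    have := main_ineq Ha Hua Hw' Er r0. have := sq_pos vn.
    rewrite (Ham_val h Er) lte_fin /pr /=. nra.
  apply/seteqP; split => u /=.
  + case=> Hu Hmax. apply/eqP; apply/negP => un.
    have := Hmax _ D0. rewrite H00 => H1.
    have := lt_le_trans (Hlt u Hu (introN idP un)) H1. by rewrite ltxx.
  + move=> ->. split => // v Hv. rewrite H00. exact: Hle v Hv Hw.
- move=> Hbd eta Heta l theta l0 Hd.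
  have Hw : antipolar (unit_ball nu) (- h.1, h.2) by apply: ap_closed; case: Hbd.
  case: Heta => E1 E2.
  rewrite /dangles /= E1 E2 /hcosh /hsinh in Hd.
  rewrite /hcosh /hsinh.
  set p := hpt (unit_ball nu) w0 theta in Hd *.
  have Pp : bd (unit_ball nu) p.
    rewrite /p /hpt.
    have [[x Hx]|Hn] := pselect (exists x, hangle (unit_ball nu) w0 x theta).
      by case: (@xgetPex _ (0, 0) [set w | hangle (unit_ball nu) w0 w theta] (ex_intro _ x Hx)).
    exfalso; move: Hd; rewrite /p /hpt xgetPN /=.
      by rewrite !mul0r subr0 => /eqP; rewrite eq_sym oner_eq0.
    by move=> x hx; apply: Hn; exists x.
  have Up : unit_ball nu p by apply: ub_closed Ha _; case: Pp.
  clearbody p.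
  have [rp [Ep rp1]] := ub_fin Ha Up.
  have [->|ln] := eqVneq l 0.
    rewrite !mul0r. split => // v Hv. rewrite H00. exact: Hle.
  have lp : 0 < l by rewrite lt_def ln.
  have El := homf Ha Ep lp.
  change (l * p.1, l * p.2) with (sc l p).
  split; first by apply: (@ge_dom _ _ (l * rp)); rewrite El.
  move=> v Hv. apply: le_trans (Hle v Hv Hw) _.
  rewrite (Ham_val h El) lee_fin /sc /=.
  have E : h.1 * p.1 + h.2 * p.2 = -1 by rewrite -Hd; ring.
  have -> : h.1 * (l * p.1) + h.2 * (l * p.2) + l * rp
         = l * (h.1 * p.1 + h.2 * p.2 + rp) by ring.
  rewrite E; apply: mulr_ge0 => //; lra.
Qed.
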